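(* Let $r\ge0$ and $p=(p_1,\dots,p_k)\in\mathcal{P}_r$, with extended partition $p^\sharp=(p_1,\dots,p_{k'})$ and symbol $\Lambda_p$ as in the context. Say that row $i$ ($1\le i\le k'$) of $p^\sharp$ ends in a square of $\mathcal{HC}(p)$ if $s_{i,p_i}\in\mathcal{HC}(p)$ or $s_{i,p_i+1}\in\mathcal{HC}(p)$ (i.e., the row terminates in a filled square of $\mathcal{HC}(p)$, or is immediately followed by an empty one). Then the assignment $i\mapsto\widetilde p_i$ identifies the set $Z_1(\Lambda_p)$ of single entries of $\Lambda_p$ with the set of rows of $p^\sharp$ ending in a (perhaps empty) square of $\mathcal{HC}(p)$; this gives a bijection $Z_1(\Lambda_p)\leftrightarrow\mathcal{HC}(p)$.
   Context: A partition $p=(p_1\ge\dots\ge p_k>0)$ is identified with its Young diagram $Y_p$ (rows from the top, columns from the left, starting at $1$); $s_{ij}$ is the square in row $i$, column $j$ (possibly outside $Y_p$). Rank: repeatedly removing dominos (two adjacent squares) so that a Young diagram remains ends at the staircase $(r,r-1,\dots,1)$ for a unique $r\ge0$, the rank of $p$; $\mathcal{P}_r$ is the set of partitions of rank $r$. For $p\in\mathcal{P}_r$, $\mathcal{HC}(p)$ is the set of squares $s_{ij}$ with $i+j\equiv r\pmod2$, $i+j>r+1$, such that adding $s_{ij}$ to $Y_p$ or removing it from $Y_p$ yields a Young diagram; such a square is filled if it lies in $Y_p$ and empty otherwise. Symbols: a symbol of defect $d$ is a two-row array with top row a strictly increasing sequence $\lambda_1<\dots<\lambda_{N+d}$ and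 bottom row a strictly increasing sequence $\mu_1<\dots<\mu_N$ of non-negative integers, considered up to the equivalence generated by replacing it with the symbol with top row $0,\lambda_1+1,\dots,\lambda_{N+d}+N+d$ and bottom row $0,\mu_1+1,\dots,\mu_N+N$. For a symbol $\Lambda$, $Z_1(\Lambda)$ is the set of entries appearing in exactly one of its rows and $Z_2(\Lambda)$ the set of entries appearing in both rows. Given $p=(p_1,\dots,p_k)\in\mathcal{P}_r$, form $p^\sharp=(p_1,\dots,p_{k'})$ by appending one part equal to $0$ if $r\equiv k\pmod 2$ (so $k'=k+1$), and otherwise $p^\sharp=p$ ($k'=k$). The numbers $p_i+k'-i$ ($1\le i\le k'$) split into odd ones $2\mu_j+1$ and even ones $2\lambda_j$; the symbol $\Lambda_p$ has top row the $\lambda_j$ and bottom row the $\mu_j$ (it has defect $r+1$). $\widetilde p_i$ denotes the entry of $\Lambda_p$ determined by the part $p_i$ of $p^\sharp$ (i.e. $\widetilde p_i=\lfloor (p_i+k'-i)/2\rfloor$). *)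

(* Defs.v *)
From mathcomp Require Import all_boot.
Set Implicit Arguments. Unset Strict Implicit. Unset Printing Implicit Defensive.

Definition is_partition (p : seq nat) : bool :=
  sorted geq p && all (fun x => 0 < x) p.

(* Squares s_ij are pairs (i, j), rows/columns numbered from 1. *)
Definition square := (nat * nat)%type.

Definition Y (p : seq nat) (s : square) : bool :=
  (1 <= s.1 <= size p) && (1 <= s.2 <= nth 0 p s.1.-1).

Definition is_young (S : square -> bool) : Prop :=
  forall i j, S (i, j) ->
    [/\ 1 <= i, 1 <= j, (1 < i -> S (i.-1, j)) & (1 < j -> S (i, j.-1))].

Definition adjacent (a b : square) : bool :=
  ((a.1 == b.1) && (b.2 == a.2.+1)) || ((a.2 == b.2) && (b.1 == a.1.+1)).

Definition domino_step (p q : seq nat) : Prop :=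
  is_partition q /\
  exists a b, [/\ adjacent a b, Y p a, Y p b &
                 forall x, Y q x = [&& Y p x, x != a & x != b]].

Inductive reduces : seq nat -> seq nat -> Prop :=
| reduces_refl p : reduces p p
| reduces_step p q s : domino_step p q -> reduces q s -> reduces p s.

Definition staircase (r : nat) : seq nat := [seq r - i | i <- iota 0 r].

Definition in_P (r : nat) (p : seq nat) : Prop :=
  is_partition p /\ reduces p (staircase r).

Definition addable (p : seq nat) (s : square) : Prop :=
  ~~ Y p s /\ is_young (fun x => Y p x || (x == s)).
Definition removable (p : seq nat) (s : square) : Prop :=
  Y p s /\ is_young (fun x => Y p x && (x != s)).
Definition HC (r : nat) (p : seq nat) (s : square) : Prop :=
  odd (s.1 + s.2) = odd r /\ r.+1 < s.1 + s.2 /\ (addable p s \/ removable p s).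

Definition psharp (r : nat) (p : seq nat) : seq nat :=
  if odd r == odd (size p) then rcons p 0 else p.
Definition kprime (r : nat) (p : seq nat) : nat := size (psharp r p).
Definition part (r : nat) (p : seq nat) (i : nat) : nat := nth 0 (psharp r p) i.-1.

Definition beta (r : nat) (p : seq nat) (i : nat) : nat := part r p i + kprime r p - i.
Definition betas (r : nat) (p : seq nat) : seq nat :=
  [seq beta r p i | i <- iota 1 (kprime r p)].

(* symbol Lambda_p: top row lambda_j (even 2 lambda_j), bottom row mu_j (odd 2 mu_j + 1) *)
Definition sym_top (r : nat) (p : seq nat) : seq nat :=
  [seq b./2 | b <- betas r p & ~~ odd b].
Definition sym_bot (r : nat) (p : seq nat) : seq nat :=
  [seq b./2 | b <- betas r p & odd b].

Definition Z1 (r : nat) (p : seq nat) (z : nat) : bool :=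
  (z \in sym_top r p) != (z \in sym_bot r p).

Definition ptilde (r : nat) (p : seq nat) (i : nat) : nat := (beta r p i)./2.

Definition ends_in_HC (r : nat) (p : seq nat) (i : nat) : Prop :=
  HC r p (i, part r p i) \/ HC r p (i, (part r p i).+1).

(* Main.v *)
Require Import Defs.
From mathcomp Require Import all_boot zify.

Definition bt (N : nat) (p : seq nat) (x : nat) := nth 0 p x + N - x.+1.
Definition bet N p := [seq bt N p x | x <- iota 0 N].
Definition od N p := count odd (bet N p).
Definition Inv r p := forall N, size p <= N -> odd N = ~~ odd r -> (od N p).*2 + r.+1 = N.

Lemma Y_nth p i j : Y p (i, j) = [&& 0 < i, 0 < j & j <= nth 0 p i.-1].
Proof.
rewrite /Y /=; case: i => [|i] //=.
case: (ltnP i (size p)) => h.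
  by [].
rewrite (nth_default 0 h) andbC /=; case: j => [|j] //=; by rewrite andbF.
Qed.

Lemma od_step N p : size p <= N -> od N.+2 p = (od N p).+1.
Proof.
move=> hs; rewrite /od /bet -addn2 iotaD map_cat count_cat.
have -> : [seq bt (N + 2) p x | x <- iota 0 N] = [seq bt N p x + 2 | x <- iota 0 N].
  apply/eq_in_map => x; rewrite mem_iota /bt => /andP[_ hx]; lia.
rewrite /= /bt !nth_default //; last by lia.
have -> : count odd [seq bt N p x + 2 | x <- iota 0 N] = count odd [seq bt N p x | x <- iota 0 N].
  rewrite !count_map; apply: eq_count => x /=; rewrite addn2 /=; by rewrite negbK.
have -> : 0 + (N + 2) - (0 + N).+1 = 1 by lia.
have -> : 0 + (N + 2) - (0 + N).+2 = 0 by lia.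
by rewrite /= addn1.
Qed.

Lemma od_add N p m : size p <= N -> od (N + m.*2) p = od N p + m.
Proof.
move=> hs; elim: m => [|m IH]; first by rewrite double0 !addn0.
have -> : N + m.+1.*2 = (N + m.*2).+2 by lia.
rewrite od_step ?IH ?addnS //; lia.
Qed.

Lemma stair_od r : od r.+1 (staircase r) = 0.
Proof.
rewrite /od /bet count_map; apply/eqP; rewrite -leqn0 leqNgt -has_count.
apply/hasP => [[x]]; rewrite mem_iota => /andP[_ hx] /=.
rewrite /bt /staircase.
case: (ltnP x r) => h.
  rewrite (nth_map 0) ?size_iota // nth_iota //.
  have -> : r - (0 + x) + r.+1 - x.+1 = (r - x).*2 by lia.
  by rewrite odd_double.
rewrite nth_default ?size_map ?size_iota //.
have -> : 0 + r.+1 - x.+1 = 0 by lia.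
done.
Qed.

Lemma stair_inv r : Inv r (staircase r).
Proof.
move=> N; rewrite size_map size_iota => hN hpar.
have hm : N = r.+1 + ((N - r.+1)./2).*2.
  have hr : r < N.
    rewrite ltn_neqAle hN andbT; apply/eqP => e; rewrite e in hpar; by case: (odd N) hpar.
  lia.
rewrite hm od_add ?size_map ?size_iota // stair_od; lia.
Qed.

Lemma size_dom p q : domino_step p q -> size q <= size p.
Proof.
move=> [/andP[_ hpos] [a [b [_ _ _ hY]]]].
rewrite leqNgt; apply/negP => hlt.
have hq : 0 < nth 0 q (size p) by move/all_nthP: hpos; apply.
have := hY ((size p).+1, 1).
rewrite !Y_nth /= hq => /esym/andP[].
by rewrite nth_default.
Qed.

Lemma L_same u v : (forall j, 0 < j -> (j <= u) = (j <= v)) -> u = v.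
Proof.
move=> H; apply/eqP; rewrite eqn_leq; apply/andP; split.
- case: u H => [|u] H //; by rewrite -H.
- case: v H => [|v] H //; by rewrite H.
Qed.

Lemma L_v u v c : 0 < c -> c <= v ->
  (forall j, 0 < j -> (j <= u) = (j <= v) && (j != c)) -> v = c /\ u = c.-1.
Proof.
move=> hc hcv H.
have h1 := H c hc; rewrite hcv eqxx /= in h1.
have hv : v = c.
  apply/eqP; apply/negPn/negP => hne.
  have := H v (leq_trans hc hcv); rewrite leqnn hne /= => hvu; lia.
split => //.
case: (ltnP 1 c) => hc1.
  have := H c.-1 (ltac:(lia)); rewrite hv (leq_pred c) /=.
  have -> : (c.-1 != c) by lia.
  move=> h2; lia.
lia.
Qed.

Lemma L_h u v c : 0 < c -> c.+1 <= v ->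
  (forall j, 0 < j -> (j <= u) = [&& (j <= v), (j != c) & (j != c.+1)]) -> v = c.+1 /\ u = c.-1.
Proof.
move=> hc hcv H.
have h1 := H c hc; rewrite (ltnW hcv) eqxx /= in h1.
have hv : v = c.+1.
  apply/eqP; apply/negPn/negP => hne.
  have hvc : v != c by lia.
  have := H v (leq_trans hc (ltnW hcv)); rewrite leqnn hne hvc /= => hvu; lia.
split => //.
case: (ltnP 1 c) => hc1.
  have := H c.-1 (ltac:(lia)); rewrite hv.
  have -> : (c.-1 <= c.+1) by lia.
  have -> : (c.-1 != c) by lia.
  have -> : (c.-1 != c.+1) by lia.
  move=> h2; lia.
lia.
Qed.

Lemma count_split N x0 (f : nat -> nat) : x0.+1 < N ->
  count odd (map f (iota 0 N)) = count odd (map f (iota 0 x0)) + (odd (f x0) + odd (f x0.+1))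
     + count odd (map f (iota x0.+2 (N - x0.+2))).
Proof.
move=> h.
rewrite {1}(_ : N = x0 + (2 + (N - x0.+2))); last by lia.
rewrite iotaD iotaD !map_cat !count_cat /= add0n addn0 addnA.
by rewrite (_ : x0 + 2 = x0.+2) //; lia.
Qed.

Lemma od_dom N p q : domino_step p q -> size p <= N -> od N p = od N q.
Proof.
move=> [_ [[i j] [[i' j'] [hadj hYa hYb hY]]]] hN.
have key : forall x k, 0 < k -> (k <= nth 0 q x) =
   [&& k <= nth 0 p x, (x.+1,k) != (i,j) & (x.+1,k) != (i',j')].
  by move=> x k hk; have := hY (x.+1, k); rewrite !Y_nth /= hk.
rewrite !Y_nth /= in hYa hYb.
move: hYa hYb => /and3P[hi hj hja] /and3P[hi' hj' hjb].
have hsz : forall x k, 0 < k -> k <= nth 0 p x -> x < size p.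
  move=> x k hk hkx; rewrite ltnNge; apply/negP => h; rewrite nth_default // in hkx; lia.
rewrite /od /bet.
case/orP: hadj => /andP[/eqP /= e1 /eqP /= e2]; subst.
- set x0 := i'.-1.
  have hx0 : x0 < size p := hsz _ _ hj hja.
  have hrow : forall x, x != x0 -> nth 0 q x = nth 0 p x.
    move=> x hx; apply: L_same => k hk; rewrite key // !xpair_eqE.
    have -> : (x.+1 == i') = false by lia.
    by rewrite /= andbT.
  have [hp hq] : nth 0 p x0 = j.+1 /\ nth 0 q x0 = j.-1.
    apply: L_h => // k hk; rewrite key // !xpair_eqE.
    have -> : (x0.+1 == i') by lia.
    by [].
  rewrite !count_map; apply: eq_in_count => x; rewrite mem_iota => /andP[_ hx] /=.
  case: (eqVneq x x0) => [->|hne]; last by rewrite /bt hrow.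
  rewrite /bt hp hq; lia.
- set x0 := i.-1.
  have hx1 : i < size p := hsz _ _ hj' hjb.
  have ex : x0.+1 = i by lia.
  have [hp0 hq0] : nth 0 p x0 = j' /\ nth 0 q x0 = j'.-1.
    apply: L_v => // k hk; rewrite key // !xpair_eqE ex eqxx /=.
    have -> : (i == i.+1) = false by lia.
    by rewrite andbT.
  have [hp1 hq1] : nth 0 p i = j' /\ nth 0 q i = j'.-1.
    apply: L_v => // k hk; rewrite key // !xpair_eqE eqxx /=.
    have -> : (i.+1 == i) = false by lia.
    by [].
  have hrow : forall x, x != x0 -> x != i -> nth 0 q x = nth 0 p x.
    move=> x hx hx'; apply: L_same => k hk; rewrite key // !xpair_eqE.
    have -> : (x.+1 == i) = false by lia.
    have -> : (x.+1 == i.+1) = false by lia.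
    by rewrite /= andbT.
  have hlt : x0.+1 < N by lia.
  rewrite (@count_split N x0 (bt N p) hlt) (@count_split N x0 (bt N q) hlt).
  congr (_ + _ + _).
  + rewrite !count_map; apply: eq_in_count => x; rewrite mem_iota => /andP[_ hx] /=.
    rewrite /bt hrow //; lia.
  + rewrite ex /bt hp0 hq0 hp1 hq1; lia.
  + rewrite !count_map; apply: eq_in_count => x; rewrite mem_iota => /andP[hx _] /=.
    rewrite /bt hrow //; lia.
Qed.

Lemma inv_dom r p q : domino_step p q -> Inv r q -> Inv r p.
Proof.
move=> hd hq N hN hpar.
rewrite (od_dom _ _ _ hd hN); apply: hq => //.
exact: leq_trans (size_dom _ _ hd) hN.
Qed.

Lemma inP_inv r p : in_P r p -> Inv r p.
Proof.
move=> [_ hr].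
have : forall s, reduces p s -> s = staircase r -> Inv r p.
  move=> s; elim => [p0 -> | p0 q0 s0 hd _ IH hs]; first exact: stair_inv.
  exact: inv_dom r p0 q0 hd (IH hs).
by move/(_ _ hr erefl).
Qed.

Lemma nth_mono p x y : is_partition p -> x <= y -> nth 0 p y <= nth 0 p x.
Proof.
move=> /andP[hs _] hxy.
case: (ltnP y (size p)) => hy; last by rewrite nth_default.
have hx : x < size p by exact: leq_ltn_trans hxy hy.
have := sorted_leq_nth (T:=nat) (leT:=geq) _ _ 0 hs.
apply => //.
- by move=> a b c /= h1 h2; exact: leq_trans h2 h1.
- by move=> a /=.
Qed.

Lemma nth_pos p x : is_partition p -> x < size p -> 0 < nth 0 p x.
Proof. by move=> /andP[_ /all_nthP h] hx; apply: h. Qed.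

Lemma nth_big p x : size p <= x -> nth 0 p x = 0.
Proof. by move=> h; rewrite nth_default. Qed.

Lemma kprime_eq r p : kprime r p = if odd r == odd (size p) then (size p).+1 else size p.
Proof. by rewrite /kprime /psharp; case: ifP => _; rewrite ?size_rcons. Qed.

Lemma nth_psharp r p x : nth 0 (psharp r p) x = nth 0 p x.
Proof.
rewrite /psharp; case: ifP => _ //; rewrite nth_rcons.
case: ltngtP => // h; last by rewrite h nth_default.
by rewrite nth_default // ltnW.
Qed.

Lemma part_eq r p x : part r p x.+1 = nth 0 p x.
Proof. by rewrite /part nth_psharp. Qed.

Lemma betas_eq r p : betas r p = bet (kprime r p) p.
Proof.
rewrite /betas /bet -[1]/(1 + 0) iotaDl -map_comp; apply/eq_map => x /=.
by rewrite /beta /bt add1n part_eq.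
Qed.

Lemma ptilde_eq r p x : ptilde r p x.+1 = (bt (kprime r p) p x)./2.
Proof. by rewrite /ptilde /beta /bt part_eq. Qed.

Lemma mem_top s z : (z \in [seq b./2 | b <- s & ~~ odd b]) = (z.*2 \in s).
Proof.
apply/mapP/idP => [[b]|h].
  rewrite mem_filter => /andP[hb bin] ->.
  by have -> : (b./2).*2 = b by lia.
exists z.*2; first by rewrite mem_filter h odd_double.
lia.
Qed.

Lemma mem_bot s z : (z \in [seq b./2 | b <- s & odd b]) = (z.*2.+1 \in s).
Proof.
apply/mapP/idP => [[b]|h].
  rewrite mem_filter => /andP[hb bin] ->.
  by have -> : (b./2).*2.+1 = b by lia.
exists z.*2.+1; first by rewrite mem_filter h /= odd_double.
lia.
Qed.

Lemma Z1_eq r p z : Z1 r p z = ((z.*2 \in bet (kprime r p) p) != (z.*2.+1 \in bet (kprime r p) p)).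
Proof. by rewrite /Z1 /sym_top /sym_bot mem_top mem_bot betas_eq. Qed.

Lemma mem_bet N p v : reflect (exists2 y, y < N & v = bt N p y) (v \in bet N p).
Proof.
apply: (iffP mapP) => [[y]|[y hy ->]].
  by rewrite mem_iota => /andP[_ hy] ->; exists y.
by exists y; rewrite // mem_iota.
Qed.

Lemma young_Y p : is_partition p -> is_young (Y p).
Proof.
move=> hp i j; rewrite !Y_nth => /and3P[hi hj hji]; split => // h.
- rewrite hj /=; have := nth_mono p i.-2 i.-1 hp; lia.
- lia.
Qed.

Lemma removable_iff p i j : is_partition p ->
  removable p (i, j) <-> [/\ 0 < i, 0 < j, j = nth 0 p i.-1 & nth 0 p i < j].
Proof.
move=> hp; split.
  move=> [hY hy]; move: (hY); rewrite Y_nth => /and3P[hi hj hji].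
  split => //.
  - apply/eqP; rewrite eqn_leq hji /=; rewrite leqNgt; apply/negP => hlt.
    have := hy i j.+1; rewrite !Y_nth hi /=.
    have -> : j < nth 0 p i.-1 by [].
    rewrite !xpair_eqE eqxx /=.
    have -> : (j.+1 == j) = false by lia.
    move=> /(_ isT) [_ _ _ /(_ hj)].
    by rewrite /= eqxx andbF.
  - rewrite ltnNge; apply/negP => hle.
    have := hy i.+1 j; rewrite !Y_nth hj /=.
    rewrite hle !xpair_eqE eqxx /=.
    have -> : (i.+1 == i) = false by lia.
    move=> /(_ isT) [_ _ /(_ hi) ].
    by rewrite /= eqxx andbF.
move=> [hi hj hji hlt]; split; first by rewrite Y_nth hi hj hji leqnn.
move=> a b /andP[hab hne].
have [ha hb hu hl] := young_Y p hp a b hab.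
split => // h.
- rewrite hu //=; apply/negP => /eqP [e1 e2]; subst.
  move: hab; rewrite Y_nth => /and3P[_ _] h2. by have := leq_ltn_trans h2 hlt; rewrite ltnn.
- rewrite hl //=; apply/negP => /eqP [e1 e2]; subst.
  move: hab; rewrite Y_nth => /and3P[_ _]; lia.
Qed.

Lemma addable_iff p i j : is_partition p ->
  addable p (i, j) <-> [/\ 0 < i, j = (nth 0 p i.-1).+1 & (1 < i -> j <= nth 0 p i.-2)].
Proof.
move=> hp; split.
  move=> [hnY hy].
  have [hi hj hu hl] := hy i j (introT orP (or_intror (eqxx _))).
  move: hnY; rewrite Y_nth hi hj /= -ltnNge => hlt.
  split => //.
  - case: (ltnP 1 j) => h1; last by lia.
    move: (hl h1); rewrite Y_nth xpair_eqE eqxx /=.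
    have -> : (j.-1 == j) = false by lia.
    rewrite orbF => /and3P[_ _]; lia.
  - move=> h1; move: (hu h1); rewrite Y_nth xpair_eqE /=.
    have -> : (i.-1 == i) = false by lia.
    rewrite orbF => /and3P[_ _]; done.
move=> [hi hj hu]; split.
  rewrite Y_nth hi /= hj; lia.
move=> a b /orP[hab|/eqP [-> ->]].
  have [ha hb hu' hl'] := young_Y p hp a b hab.
  by split => // h; [rewrite hu'|rewrite hl'].
split => //; first by rewrite hj.
- move=> h; rewrite Y_nth (hu h) /=; apply/orP; left; apply/andP; split; first lia.
  have := hu h; rewrite hj; lia.
- move=> h; rewrite Y_nth hi hj /=; apply/orP; left; lia.
Qed.

Lemma ev_bound N p x m : is_partition p -> x < N ->
  (forall y, x < y < N -> ~~ odd (bt N p y) -> bt N p y < m) ->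
  count (fun v => ~~ odd v) (bet N p) <= x + ~~ odd (bt N p x) + uphalf m.
Proof.
move=> hp hx hm.
rewrite /bet [in iota 0 N](_ : N = x + (1 + (N - x.+1))); last by lia.
rewrite iotaD iotaD !map_cat !count_cat /= add0n addn0 -addnA.
apply: leq_add; first by rewrite (leq_trans (count_size _ _)) // size_map size_iota.
apply: leq_add => //.
have hcnt : forall k, count (fun v => ~~ odd v) (iota 0 k) = uphalf k.
  elim => [|k IH] //; rewrite -addn1 iotaD count_cat IH /= addn0; lia.
rewrite -hcnt -!size_filter; apply: uniq_leq_size.
  rewrite filter_uniq // map_inj_in_uniq ?iota_uniq //.
  move=> y1 y2; rewrite !mem_iota => /andP[h1 h1'] /andP[h2 h2'].
  rewrite /bt => e; apply/eqP; rewrite eqn_leq; apply/andP; split;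
   rewrite leqNgt; apply/negP => hlt.
  - have := nth_mono p y2 y1 hp (ltnW hlt); lia.
  - have := nth_mono p y1 y2 hp (ltnW hlt); lia.
move=> v; rewrite !mem_filter => /andP[hv /mapP [y]]; rewrite mem_iota => /andP[h1 h2] ev.
subst v; rewrite mem_iota hv /= add0n; apply: hm => //; apply/andP; split; lia.
Qed.

Lemma basics r p : in_P r p ->
  [/\ size p <= kprime r p, kprime r p <= (size p).+1, odd (kprime r p) = ~~ odd r
    & (od (kprime r p) p).*2 + r.+1 = kprime r p].
Proof.
move=> hP.
have [h1 h2 h3] : [/\ size p <= kprime r p, kprime r p <= (size p).+1 & odd (kprime r p) = ~~ odd r].
  rewrite kprime_eq; case: ifP => /eqP h; split => //=.
  - by rewrite h.
  - by case: (odd r) h => /=; case: (odd (size p)).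
split => //; exact: inP_inv hP _ h1 h3.
Qed.

Lemma ev_od N p : count (fun v => ~~ odd v) (bet N p) + od N p = N.
Proof.
rewrite addnC /od; have := count_predC odd (bet N p).
by rewrite /bet size_map size_iota.
Qed.

Lemma bt_lt N p x y : is_partition p -> x < y -> y < N -> bt N p y < bt N p x.
Proof. move=> hp hxy hy; have := nth_mono p x y hp (ltnW hxy); rewrite /bt; lia. Qed.

Lemma bt_inj N p x y : is_partition p -> x < N -> y < N -> bt N p x = bt N p y -> x = y.
Proof.
move=> hp hx hy e; case: (ltngtP x y) => // h.
- by have := bt_lt N p x y hp h hy; rewrite e ltnn.
- by have := bt_lt N p y x hp h hx; rewrite e ltnn.
Qed.

Lemma HC1 r p x : in_P r p -> x < kprime r p ->
  HC r p (x.+1, nth 0 p x) <->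
  odd (bt (kprime r p) p x) /\ (bt (kprime r p) p x).-1 \notin bet (kprime r p) p.
Proof.
move=> hP hx; have [hs hN hpar hinv] := basics r p hP; have hp := hP.1.
move: hx hs hN hpar hinv; set N := kprime r p => hx hs hN hpar hinv.
have hb : bt N p x + x.+1 = nth 0 p x + N by rewrite /bt; lia.
split.
  move=> [/= hpar1 [hineq [hadd|hrem]]].
    by move/(addable_iff p _ _ hp): hadd => [_ /= ]; lia.
  move/(removable_iff p _ _ hp): hrem => [_ hpos _ hlt] /=.
  have ho : odd (bt N p x) by lia.
  split => //; apply/negP => /mem_bet [y hy e].
  case: (leqP y x) => hyx.
  - have := nth_mono p y x hp hyx; move: e; rewrite /bt; lia.
  - have := nth_mono p x.+1 y hp hyx; move: e hlt; rewrite /bt /=; lia.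
move=> [ho hn].
have hpos : 0 < nth 0 p x.
  case: (ltnP x (size p)) => h; first exact: nth_pos.
  rewrite nth_big // in hb; lia.
have hlt : nth 0 p x.+1 < nth 0 p x.
  case: (ltnP x.+1 N) => h; last by rewrite nth_big //; lia.
  have hne : bt N p x.+1 != (bt N p x).-1.
    by apply/negP => /eqP e; move: hn; rewrite -e; move/negP; apply; apply/mem_bet; exists x.+1.
  have := nth_mono p x x.+1 hp (leqnSn x); move: hne; rewrite /bt; lia.
have hev := ev_bound N p x (bt N p x).-1 hp hx.
have hev' : count (fun v => ~~ odd v) (bet N p) <= x + ~~ odd (bt N p x) + uphalf (bt N p x).-1.
  apply: hev => y /andP[hxy hyN] _.
  have := bt_lt N p x y hp hxy hyN.
  have : bt N p y != (bt N p x).-1.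
    by apply/negP => /eqP e; move: hn; rewrite -e; move/negP; apply; apply/mem_bet; exists y.
  lia.
have := ev_od N p.
rewrite ho /= in hev'.
split => /=; first lia.
split; first lia.
right; apply/(removable_iff p _ _ hp); split => //.
Qed.

Lemma HC2 r p x : in_P r p -> x < kprime r p ->
  HC r p (x.+1, (nth 0 p x).+1) <->
  ~~ odd (bt (kprime r p) p x) /\ (bt (kprime r p) p x).+1 \notin bet (kprime r p) p.
Proof.
move=> hP hx; have [hs hN hpar hinv] := basics r p hP; have hp := hP.1.
move: hx hs hN hpar hinv; set N := kprime r p => hx hs hN hpar hinv.
have hb : bt N p x + x.+1 = nth 0 p x + N by rewrite /bt; lia.
split.
  move=> [/= hpar1 [hineq [hadd|hrem]]]; last first.
    by move/(removable_iff p _ _ hp): hrem => [_ _ /= ]; lia.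
  move/(addable_iff p _ _ hp): hadd => [_ _ hup] /=.
  have ho : ~~ odd (bt N p x) by lia.
  split => //; apply/negP => /mem_bet [y hy e].
  case: (leqP x y) => hyx.
  - have := nth_mono p x y hp hyx; move: e; rewrite /bt; lia.
  - have hx1 : 1 < x.+1 by lia.
    have := hup hx1; rewrite /=.
    have := nth_mono p y x.-1 hp (ltac:(lia)); move: e; rewrite /bt; lia.
move=> [ho hn].
have hev := ev_bound N p x (bt N p x) hp hx.
have hev' : count (fun v => ~~ odd v) (bet N p) <= x + ~~ odd (bt N p x) + uphalf (bt N p x).
  apply: hev => y /andP[hxy hyN] _.
  exact: bt_lt N p x y hp hxy hyN.
have := ev_od N p.
rewrite ho /= in hev'.
split => /=; first lia.
split; first lia.
left; apply/(addable_iff p _ _ hp); split => //= hx1.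
have hne : bt N p x.-1 != (bt N p x).+1.
  by apply/negP => /eqP e; move: hn; rewrite -e; move/negP; apply; apply/mem_bet; exists x.-1 => //; lia.
have := nth_mono p x.-1 x hp (leq_pred x); move: hne; rewrite /bt; lia.
Qed.

Lemma Z1_row r p x : in_P r p -> x < kprime r p ->
  Z1 r p (ptilde r p x.+1) <-> ends_in_HC r p x.+1.
Proof.
move=> hP hx.
rewrite /ends_in_HC part_eq HC1 // HC2 // ptilde_eq Z1_eq.
have hin : bt (kprime r p) p x \in bet (kprime r p) p by apply/mem_bet; exists x.
move: hin; set b := bt (kprime r p) p x => hin.
case: (boolP (odd b)) => ho.
  rewrite (_ : (b./2).*2 = b.-1); last lia.
  rewrite (_ : b.-1.+1 = b); last lia.
  rewrite hin; case: (b.-1 \in _) => /=; split; try done.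
  - by move=> [[]|[]].
  - by move=> _; left.
rewrite (_ : (b./2).*2 = b); last lia.
rewrite hin; case: (b.+1 \in _) => /=; split; try done.
- by move=> [[]|[]].
- by move=> _; right.
Qed.

Theorem mainTheorem3 (r : nat) (p : seq nat) :
  in_P r p ->
  (forall i, 1 <= i <= kprime r p -> (Z1 r p (ptilde r p i) <-> ends_in_HC r p i)) /\
  (forall i j, 1 <= i <= kprime r p -> 1 <= j <= kprime r p ->
     ends_in_HC r p i -> ends_in_HC r p j -> ptilde r p i = ptilde r p j -> i = j) /\
  (forall z, Z1 r p z ->
     exists i, [/\ 1 <= i <= kprime r p, ends_in_HC r p i & ptilde r p i = z]) /\
  (forall s, HC r p s ->
     1 <= s.1 <= kprime r p /\ (s.2 = part r p s.1 \/ s.2 = (part r p s.1).+1)).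
Proof.
move=> hP; have [hs hN hpar hinv] := basics r p hP; have hp := hP.1.
have c1 : forall i, 1 <= i <= kprime r p -> (Z1 r p (ptilde r p i) <-> ends_in_HC r p i).
  by move=> [|x] //= hx; apply: Z1_row.
split => //; split.
  move=> [|x] [|y] // /= hx hy hei hej e.
  have zx := (c1 x.+1 hx).2 hei.
  rewrite !ptilde_eq in e zx; rewrite Z1_eq in zx.
  congr S; apply: (bt_inj (kprime r p) p x y hp hx hy).
  apply/eqP/negPn/negP => hne.
  have hbx : bt (kprime r p) p x \in bet (kprime r p) p by apply/mem_bet; exists x.
  have hby : bt (kprime r p) p y \in bet (kprime r p) p by apply/mem_bet; exists y.
  move: hbx hby hne e zx.
  set bx := bt (kprime r p) p x; set by_ := bt (kprime r p) p y => hbx hby hne e zx.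
  case: (boolP (odd bx)) => ho.
  - have e1 : bx./2.*2.+1 = bx by lia.
    have e2 : bx./2.*2 = by_ by lia.
    by rewrite e1 e2 hbx hby in zx.
  - have e1 : bx./2.*2 = bx by lia.
    have e2 : bx./2.*2.+1 = by_ by lia.
    by rewrite e2 e1 hbx hby in zx.
split.
  move=> z hz; move: (hz); rewrite Z1_eq; case h2: (z.*2 \in _) => /= h3.
  - have [y hy e] : exists2 y, y < kprime r p & z.*2 = bt (kprime r p) p y by apply/mem_bet; rewrite h2.
    have hy' : 1 <= y.+1 <= kprime r p by [].
    have ez : ptilde r p y.+1 = z by rewrite ptilde_eq -e; lia.
    exists y.+1; split => //; apply/(c1 _ hy'); by rewrite ez.
  - have [y hy e] : exists2 y, y < kprime r p & z.*2.+1 = bt (kprime r p) p y by apply/mem_bet; move: h3; case: (_ \in _).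
    have hy' : 1 <= y.+1 <= kprime r p by [].
    have ez : ptilde r p y.+1 = z by rewrite ptilde_eq -e; lia.
    exists y.+1; split => //; apply/(c1 _ hy'); by rewrite ez.
move=> [a b] [/= hpar1 [hineq [hadd|hrem]]].
- move/(addable_iff p _ _ hp): hadd => [ha hb hup].
  case: a ha hb hup hpar1 hineq => [|x] // _ hb hup hpar1 hineq /=.
  rewrite part_eq; split; last by right.
  rewrite /= in hb hup.
  case: (ltnP x (size p)) => hxs; first lia.
  rewrite nth_big // in hb.
  have hxe : x = size p.
    case: x hxs hb hup {hpar1 hineq} => [|x] hxs hb hup; first lia.
    have := hup isT; rewrite /= hb.
    case: (ltnP x (size p)) => h; first lia.
    by rewrite nth_big.
  subst; lia.
- move/(removable_iff p _ _ hp): hrem => [ha hb e hlt].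
  case: a ha hb e hlt hpar1 hineq => [|x] // _ hb e hlt hpar1 hineq /=.
  rewrite part_eq; split; last by left.
  rewrite /= in hb e hlt.
  case: (ltnP x (size p)) => hxs; first lia.
  rewrite nth_big // in e; lia.
Qed.
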